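(* Let $N,k$ be positive integers, $p_1,\dots,p_N$ primes with all $p_i>2$, and $s_1,\dots,s_N$ positive integers. Then the group $\mathbb{Z}_{p_1^{s_1}\cdots p_N^{s_N}}\mathbin{\mathrm{wr}}\mathbb{Z}^{2k}$ admits an automorphism with finite Reidemeister number.
   Context: $\mathbb{Z}_q\mathbin{\mathrm{wr}}\mathbb{Z}^d=\bigoplus_{x\in\mathbb{Z}^d}(\mathbb{Z}_q)_x\rtimes\mathbb{Z}^d$ is the restricted wreath product with $\mathbb{Z}^d$ acting by shifting indices. The Reidemeister number $R(\varphi)$ of an automorphism $\varphi$ of a group $G$ is the number of equivalence classes of the relation $g_1\sim hg_2\varphi(h^{-1})$, $h\in G$. *)

(* Defs.v *)
From HB Require Import structures.
From mathcomp Require Import all_boot all_order all_algebra.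
Set Implicit Arguments. Unset Strict Implicit. Unset Printing Implicit Defensive.
Import GRing.Theory.
Local Open Scope ring_scope.

Definition Zd (d : nat) := 'rV[int]_d.

Section Wreath.
Variables (q d : nat).

Definition fin_supp (f : Zd d -> 'Z_q) : Prop :=
  exists s : seq (Zd d), forall x, x \notin s -> f x = 0.

Record lamp := Lamp { lamp_fun :> Zd d -> 'Z_q; lamp_fin : fin_supp lamp_fun }.

(* elements (f, v) of  (+)_{x in Z^d} Z_q  >|  Z^d *)
Record WR := MkWR { wr_f : lamp; wr_v : Zd d }.

Lemma fin_supp0 : fin_supp (fun _ => 0).
Proof. by exists [::]. Qed.

Lemma fin_supp_mul (f g : lamp) (v : Zd d) :
  fin_supp (fun x => f x + g (x - v)).
Proof.
case: f => f [s Hs]; case: g => g [t Ht] /=.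
exists (s ++ map (fun y => y + v) t) => x; rewrite mem_cat negb_or => /andP[xs xt].
rewrite Hs // Ht ?addr0 //; apply: contra xt => H.
by apply/mapP; exists (x - v) => //; rewrite subrK.
Qed.

Lemma fin_supp_inv (f : lamp) (v : Zd d) : fin_supp (fun x => - f (x + v)).
Proof.
case: f => f [s Hs] /=.
exists (map (fun y => y - v) s) => x xs; rewrite Hs ?oppr0 //; apply: contra xs => H.
by apply/mapP; exists (x + v) => //; rewrite addrK.
Qed.

Definition wr_one : WR := MkWR (Lamp fin_supp0) 0.
Definition wr_mul (a b : WR) : WR :=
  MkWR (Lamp (fin_supp_mul (wr_f a) (wr_f b) (wr_v a))) (wr_v a + wr_v b).
Definition wr_inv (a : WR) : WR :=
  MkWR (Lamp (fin_supp_inv (wr_f a) (wr_v a))) (- wr_v a).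

Definition is_automorphism (phi : WR -> WR) : Prop :=
  bijective phi /\ forall a b, phi (wr_mul a b) = wr_mul (phi a) (phi b).

Definition twisted_conj (phi : WR -> WR) (g1 g2 : WR) : Prop :=
  exists h, g1 = wr_mul (wr_mul h g2) (wr_inv (phi h)).

Definition finite_reidemeister (phi : WR -> WR) : Prop :=
  exists (n : nat) (r : nat -> WR),
    forall g, exists i, (i < n)%N /\ twisted_conj phi g (r i).
End Wreath.

(* Main.v *)
Require Import Defs.
From mathcomp Require Import all_boot all_order all_algebra.
From mathcomp Require Import ring zify.
From Stdlib Require Import FunctionalExtensionality ProofIrrelevance.
Set Implicit Arguments. Unset Strict Implicit. Unset Printing Implicit Defensive.
Import GRing.Theory Num.Theory.

Local Open Scope ring_scope.

Lemma shp (k : nat) (i : 'I_(2*k)) : ((i + k) %% (2*k) < 2*k)%N.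
Proof. apply: ltn_pmod. exact: (leq_ltn_trans (leq0n i) (ltn_ord i)). Qed.

Definition sh (k : nat) (i : 'I_(2*k)) : 'I_(2*k) := Ordinal (shp i).

Lemma sh_lt k (i : 'I_(2*k)) : (i < k)%N -> val (sh i) = (i + k)%N.
Proof. move=> H; rewrite /= modn_small //; lia. Qed.

Lemma sh_ge k (i : 'I_(2*k)) : ~~ (i < k)%N -> val (sh i) = (i - k)%N.
Proof.
move=> H; rewrite /=.
have -> : (i + k = (i - k) + 2 * k)%N by have := ltn_ord i; lia.
rewrite modnDr modn_small //; have := ltn_ord i; lia.
Qed.

Lemma sh_ltE k (i : 'I_(2*k)) : (sh i < k)%N = ~~ (i < k)%N.
Proof.
case: (boolP (i < k)%N) => H.
  rewrite sh_lt //; lia.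
rewrite sh_ge //; have := ltn_ord i; lia.
Qed.

Lemma sh_sh k (i : 'I_(2*k)) : sh (sh i) = i.
Proof.
apply: val_inj; case: (boolP (i < k)%N) => H.
  have H' : ~~ (sh i < k)%N by rewrite sh_ltE H.
  rewrite (sh_ge H') (sh_lt H) /=; lia.
have H' : (sh i < k)%N by rewrite sh_ltE H.
rewrite (sh_lt H') (sh_ge H) /=; have := ltn_ord i; lia.
Qed.

Definition Mv (k : nat) (v : Zd (2*k)) : Zd (2*k) :=
  \row_i (if (i < k)%N then - v 0 (sh i) else v 0 (sh i) - v 0 i).

Definition M2 k (v : Zd (2*k)) := Mv (Mv v).

Lemma Mv_add k (u v : Zd (2*k)) : Mv (u + v) = Mv u + Mv v.
Proof.
apply/matrixP => a j; rewrite !mxE.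
move: (u 0 j) (v 0 j) (u 0 (sh j)) (v 0 (sh j)) => x y z t.
case: ifP => _; ring.
Qed.

Lemma Mv_opp k (u : Zd (2*k)) : Mv (- u) = - Mv u.
Proof.
apply/matrixP => a j; rewrite !mxE.
move: (u 0 j) (u 0 (sh j)) => x z.
case: ifP => _; ring.
Qed.

Lemma Mv_sub k (u v : Zd (2*k)) : Mv (u - v) = Mv u - Mv v.
Proof. by rewrite Mv_add Mv_opp. Qed.

Lemma M2_sub k (u v : Zd (2*k)) : M2 (u - v) = M2 u - M2 v.
Proof. by rewrite /M2 !Mv_sub. Qed.

Lemma Mv3 k (v : Zd (2*k)) : Mv (Mv (Mv v)) = v.
Proof.
apply/matrixP => a j; rewrite (ord1 a) !mxE !sh_ltE !sh_sh.
move: (v 0 j) (v 0 (sh j)) => x z.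
case: (j < k)%N => /=; ring.
Qed.

Lemma Msum k (v : Zd (2*k)) : v + Mv v + M2 v = 0.
Proof.
apply/matrixP => a j; rewrite (ord1 a) /M2 !mxE !sh_ltE !sh_sh.
move: (v 0 j) (v 0 (sh j)) => x z.
case: (j < k)%N => /=; ring.
Qed.

Lemma M4 k (z : Zd (2*k)) : M2 (M2 z) = Mv z.
Proof. by rewrite /M2 Mv3. Qed.

Lemma M6 k (z : Zd (2*k)) : M2 (M2 (M2 z)) = z.
Proof. by rewrite M4 /M2 Mv3. Qed.

Lemma Mcyc k (x w : Zd (2*k)) : M2 (M2 (M2 (x - w) - w) - w) = x.
Proof.
rewrite !M2_sub M6 M4.
have := Msum w => H.

rewrite /M2 !Mv3 -/(M2 w) -!addrA -!opprD addrA H oppr0 addr0 //.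
Qed.

Lemma fs_comp Q d (F : Zd d -> 'Z_Q) (L K : Zd d -> Zd d) :
  fin_supp F -> (forall x, K (L x) = x) -> fin_supp (fun x => - F (L x)).
Proof.
case=> s Hs HK; exists (map K s) => x xs; rewrite Hs ?oppr0 //.
apply: contra xs => H; apply/mapP; exists (L x) => //; by rewrite HK.
Qed.

Lemma fs_add Q d (F G : Zd d -> 'Z_Q) :
  fin_supp F -> fin_supp G -> fin_supp (fun x => F x + G x).
Proof.
case=> s Hs [t Ht]; exists (s ++ t) => x; rewrite mem_cat negb_or => /andP[xs xt].
by rewrite Hs // Ht // addr0.
Qed.

Lemma fs_scale Q d (c : 'Z_Q) (F : Zd d -> 'Z_Q) :
  fin_supp F -> fin_supp (fun x => c * F x).
Proof. case=> s Hs; exists s => x xs; by rewrite Hs // mulr0. Qed.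

Lemma WR_ext Q d (a b : WR Q d) :
  (forall x, wr_f a x = wr_f b x) -> wr_v a = wr_v b -> a = b.
Proof.
case: a => [[f Hf] v]; case: b => [[g Hg] w] /= Hfg ->.
have E : f = g := functional_extensionality _ _ Hfg.
subst g; by rewrite (proof_irrelevance _ Hf Hg).
Qed.

Definition alpha Q k (f : lamp Q (2*k)) : lamp Q (2*k) :=
  Lamp (@fs_comp Q (2*k) f (@M2 k) (@Mv k) (lamp_fin f) (fun x => Mv3 x)).

Definition phi Q k (a : WR Q (2*k)) : WR Q (2*k) :=
  MkWR (alpha (wr_f a)) (Mv (wr_v a)).

Definition psi Q k (a : WR Q (2*k)) : WR Q (2*k) :=
  MkWR (Lamp (@fs_comp Q (2*k) (wr_f a) (@Mv k) (@M2 k) (lamp_fin (wr_f a)) (fun x => Mv3 x)))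
       (M2 (wr_v a)).

Lemma phi_auto Q k : is_automorphism (@phi Q k).
Proof.
split.
  exists (@psi Q k) => -[f v]; apply: WR_ext => [x|] /=.
  - by rewrite opprK /M2 Mv3.
  - by rewrite /M2 Mv3.
  - by rewrite opprK /M2 Mv3.
  - by rewrite /M2 Mv3.
move=> [f v] [g w]; apply: WR_ext => [x|] /=.
  by rewrite M2_sub /M2 Mv3 opprD.
by rewrite Mv_add.
Qed.

Definition rep k (z : {ffun 'I_(2*k) -> 'I_3}) : Zd (2*k) :=
  \row_i (if (i < k)%N then ((z i : nat)%:Z) else 0).

Lemma decomp k (w : Zd (2*k)) : exists u z, w = u + rep z - Mv u.
Proof.
pose B (i : 'I_(2*k)) := divz (w 0 i + w 0 (sh i)) 3.
pose R (i : 'I_(2*k)) := modz (w 0 i + w 0 (sh i)) 3.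
exists (\row_i (if (i < k)%N then 2 * B i - w 0 (sh i) else B i)).
exists [ffun i => inord `|R i|%N].
apply/matrixP => a j; rewrite (ord1 a) !mxE ffunE !sh_ltE sh_sh.
have Hr0 : 0 <= R j by apply: modz_ge0.
have Hr3 : R j < 3 by apply: ltz_pmod.
have Hn : (`|R j|%N < 3)%N.
  by rewrite -ltz_nat abszE ger0_norm.
rewrite inordK // abszE ger0_norm //.
have := divz_eq (w 0 j + w 0 (sh j)) 3.
rewrite /B /R sh_sh (addrC (w 0 (sh j)) (w 0 j)).
move: (w 0 j) (w 0 (sh j)) (divz (w 0 j + w 0 (sh j)) 3) (modz (w 0 j + w 0 (sh j)) 3) => x y q r.
case: (j < k)%N => /= E; lia.
Qed.

Lemma key Q k (inv2 : 'Z_Q) (H2 : inv2 * 2 = 1) (w x : Zd (2*k))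
  (f : Zd (2*k) -> 'Z_Q) :
  let T := fun (b : Zd (2*k) -> 'Z_Q) y => - b (M2 (y - w)) in
  let a := fun y => inv2 * (f y + T f y + T (T f) y) in
  f x = a x + - - a (M2 (x - w)).
Proof.
move=> T a; rewrite /a /T Mcyc.
move: (f x) (f (M2 (x - w))) (f (M2 (M2 (x - w) - w))) => A B C.
transitivity (inv2 * 2 * A); first by rewrite H2 mul1r.
ring.
Qed.

Lemma main Q k (inv2 : 'Z_Q) (H2 : inv2 * 2 = 1) :
  exists phi : WR Q (2 * k) -> WR Q (2 * k),
    is_automorphism phi /\ finite_reidemeister phi.
Proof.
exists (@phi Q k); split; first exact: phi_auto.
pose FT := {ffun 'I_(2*k) -> 'I_3}.
pose z0 : FT := [ffun => ord0].
exists #|FT|, (fun i => MkWR (Lamp (@fin_supp0 Q (2*k))) (rep (nth z0 (enum FT) i))).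
move=> [f w]; have [u [z Hw]] := decomp w.
exists (index z (enum FT)); split.
  by rewrite cardE index_mem mem_enum.
rewrite nth_index ?mem_enum //.
pose T := fun (b : Zd (2*k) -> 'Z_Q) y => - b (M2 (y - w)).
have HK : forall y, (fun y => Mv y + w) (M2 (y - w)) = y.
  by move=> y; rewrite /= /M2 Mv3 subrK.
have Hf := lamp_fin f.
have HT1 : fin_supp (T f) := fs_comp (K := fun y => Mv y + w) Hf HK.
have HT2 : fin_supp (T (T f)) := fs_comp (K := fun y => Mv y + w) HT1 HK.
have Ha : fin_supp (fun y => inv2 * (f y + T f y + T (T f) y)).
  by apply: fs_scale; apply: fs_add => //; apply: fs_add.
exists (MkWR (Lamp Ha) u).
apply: WR_ext => [x|] /=.
  have E : x - (u + rep z) + Mv u = x - w.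
    by rewrite Hw opprB (addrC (Mv u)) addrA.
  rewrite addr0 E; exact: key.
by [].
Qed.

Theorem proposition4p6 (N k : nat) (p s : 'I_N -> nat) :
  (0 < N)%N -> (0 < k)%N ->
  (forall i, prime (p i) /\ (2 < p i)%N) ->
  (forall i, (0 < s i)%N) ->
  exists phi : WR (\prod_(i < N) p i ^ s i) (2 * k) ->
                WR (\prod_(i < N) p i ^ s i) (2 * k),
    is_automorphism phi /\ finite_reidemeister phi.
Proof.
move=> HN Hk Hp Hs.
set Q := (\prod_(i < N) p i ^ s i)%N.
have Hodd : odd Q.
  rewrite /Q; apply: (big_ind (fun n => odd n)) => //.
    by move=> x y Hx Hy; rewrite oddM Hx Hy.
  move=> i _; rewrite oddX; have [Hpr H2] := Hp i.
  case: (even_prime Hpr) => [E|->]; last by rewrite orbT.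
  by rewrite E in H2.
have HQ : (1 < Q)%N.
  pose i0 : 'I_N := Ordinal HN.
  rewrite /Q (bigD1 i0) //=.
  have H1 : (1 < p i0 ^ s i0)%N.
    have [Hpr H2] := Hp i0.
    rewrite -[X in (X < _)%N](expn0 (p i0)) ltn_exp2l //; exact: ltnW.
  have H0 : (0 < \prod_(i < N | i != i0) p i ^ s i)%N.
    apply: prodn_cond_gt0 => i _; rewrite expn_gt0; have [Hpr _] := Hp i.
    by rewrite prime_gt0.
  by apply: (leq_trans H1); rewrite leq_pmulr.
have Hu : (2%:R : 'Z_Q) \is a GRing.unit.
  by rewrite unitZpE // coprime_sym coprime2n.
exact: (@main Q k (2%:R)^-1 (mulVr Hu)).
Qed.
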